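(* Let $\Lambda:\mathcal{B}(\mathcal{H}_d)\to\mathcal{B}(\mathcal{H}_d)$ be a quantum operation. Then the map $$\Lambda'_{\min}[\varrho]=\sqrt{I-\Lambda^{\dagger}[I]}\,\varrho\,\sqrt{I-\Lambda^{\dagger}[I]}$$ is an extension for $\Lambda$, and any extension $\Lambda'$ for $\Lambda$ has the form $\Lambda'=\Phi\circ\Lambda'_{\min}$ for some quantum channel $\Phi:\mathcal{B}(\mathcal{H}_d)\to\mathcal{B}(\mathcal{H}_d)$.
   Context: $\mathcal{H}_d$ is a Hilbert space of finite dimension $d>1$. A quantum operation is a linear map $\Lambda:\mathcal{B}(\mathcal{H}_d)\to\mathcal{B}(\mathcal{H}_d)$ that is completely positive and trace nonincreasing, equivalently $\Lambda^\dagger[I]\le I$, where $\Lambda^\dagger$ is the dual map defined by $\mathrm{tr}[\Lambda[X]Y]=\mathrm{tr}[X\Lambda^\dagger[Y]]$. A quantum channel is a completely positive trace preserving map ($\Phi^\dagger[I]=I$). A quantum operation $\Lambda'$ is called an extension for the quantum operation $\Lambda$ if $\Lambda+\Lambda'$ is trace preserving. *)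

(* Defs.v *)
From HB Require Import structures.
From mathcomp Require Import all_boot all_order all_algebra.
Set Implicit Arguments. Unset Strict Implicit. Unset Printing Implicit Defensive.
Import Order.TTheory GRing.Theory Num.Theory.
Local Open Scope ring_scope.
Local Open Scope sesquilinear_scope.

(* B(H_d) is modelled as 'M[C]_d, C a numClosedFieldType (e.g. complex numbers). *)
Section QDefs.
Variables (C : numClosedFieldType) (d : nat).

Definition adj m n (A : 'M[C]_(m, n)) : 'M[C]_(n, m) := A ^t*.

Definition psd (A : 'M[C]_d) : Prop :=
  forall v : 'cV[C]_d, 0 <= (adj v *m A *m v) 0 0.

Definition loewner_le (A B : 'M[C]_d) : Prop := psd (B - A).

(* An operator on C^k (x) C^d = (C^d)^k, given as a k x k block matrix of
   d x d blocks, is positive semidefinite. *)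
Definition block_psd (k : nat) (X : 'I_k -> 'I_k -> 'M[C]_d) : Prop :=
  forall v : 'I_k -> 'cV[C]_d,
    0 <= \sum_(i < k) \sum_(j < k) (adj (v i) *m X i j *m v j) 0 0.

(* complete positivity: id_k (x) f is positive for all k *)
Definition completely_positive (f : 'M[C]_d -> 'M[C]_d) : Prop :=
  forall (k : nat) (X : 'I_k -> 'I_k -> 'M[C]_d),
    block_psd X -> block_psd (fun i j => f (X i j)).

(* dual map, characterized by tr[f X * Y] = tr[X * dual f Y]:
   (dual f Y)_{j i} = tr[f(E_{ij}) Y] *)
Definition dual_map (f : 'M[C]_d -> 'M[C]_d) (Y : 'M[C]_d) : 'M[C]_d :=
  \matrix_(j, i) \tr (f (delta_mx i j) *m Y).

Definition quantum_operation (f : 'M[C]_d -> 'M[C]_d) : Prop :=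
  linear f /\ completely_positive f /\ loewner_le (dual_map f 1%:M) 1%:M.

Definition trace_preserving (f : 'M[C]_d -> 'M[C]_d) : Prop :=
  dual_map f 1%:M = 1%:M.

Definition quantum_channel (f : 'M[C]_d -> 'M[C]_d) : Prop :=
  linear f /\ completely_positive f /\ trace_preserving f.

Definition extension (f f' : 'M[C]_d -> 'M[C]_d) : Prop :=
  quantum_operation f' /\ trace_preserving (fun X => f X + f' X).

(* square root of a (normal, in particular psd) matrix via the spectral
   decomposition A = P^-1 diag(s) P with P unitary: sqrt A = P^-1 diag(sqrt s) P;
   for psd A this is the unique psd square root. *)
Definition msqrt (A : 'M[C]_d) : 'M[C]_d :=
  invmx (spectralmx A) *m diag_mx (map_mx (fun x : C => sqrtC x) (spectral_diag A))
    *m spectralmx A.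

Definition Lmin (f : 'M[C]_d -> 'M[C]_d) (rho : 'M[C]_d) : 'M[C]_d :=
  let S := msqrt (1%:M - dual_map f 1%:M) in S *m rho *m S.

End QDefs.

(* Main.v *)
Require Import Defs.
From HB Require Import structures.
From mathcomp Require Import all_boot all_order all_algebra.
From mathcomp Require Import ring.
Import GRing.Theory Num.Theory.
Local Open Scope ring_scope.
Set Implicit Arguments. Unset Strict Implicit. Unset Printing Implicit Defensive.

Definition qf (C : numClosedFieldType) m n (M : 'M[C]_(m, n)) (x : 'cV[C]_m) (y : 'cV[C]_n) : C :=
  (adj x *m M *m y) 0 0.

Lemma adjZ (C : numClosedFieldType) m n (a : C) (A : 'M[C]_(m, n)) :
  adj (a *: A) = a^* *: adj A.
Proof. by apply/matrixP => i j; rewrite !mxE rmorphM. Qed.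

Lemma adjD (C : numClosedFieldType) m n (A B : 'M[C]_(m, n)) :
  adj (A + B) = adj A + adj B.
Proof. by apply/matrixP => i j; rewrite !mxE rmorphD. Qed.

Lemma adjB (C : numClosedFieldType) m n (A B : 'M[C]_(m, n)) :
  adj (A - B) = adj A - adj B.
Proof. by apply/matrixP => i j; rewrite !mxE rmorphB. Qed.

Lemma adjM (C : numClosedFieldType) m n p (A : 'M[C]_(m, n)) (B : 'M[C]_(n, p)) :
  adj (A *m B) = adj B *m adj A.
Proof. by rewrite /adj trmx_mul map_mxM. Qed.

Lemma adjK (C : numClosedFieldType) m n (A : 'M[C]_(m, n)) : adj (adj A) = A.
Proof. by apply/matrixP => i j; rewrite !mxE conjCK. Qed.

Lemma adj1 (C : numClosedFieldType) n : adj (1%:M : 'M[C]_n) = 1%:M.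
Proof. by rewrite /adj trmx1 map_mx1. Qed.

Lemma qfZl (C : numClosedFieldType) m n (M : 'M[C]_(m, n)) a x y : qf M (a *: x) y = a^* * qf M x y.
Proof. by rewrite /qf adjZ -!scalemxAl mxE. Qed.

Lemma qfZr (C : numClosedFieldType) m n (M : 'M[C]_(m, n)) a x y : qf M x (a *: y) = a * qf M x y.
Proof. by rewrite /qf -scalemxAr mxE. Qed.

Lemma qfDl (C : numClosedFieldType) m n (M : 'M[C]_(m, n)) x x' y : qf M (x + x') y = qf M x y + qf M x' y.
Proof. by rewrite /qf adjD !mulmxDl mxE. Qed.

Lemma qfDr (C : numClosedFieldType) m n (M : 'M[C]_(m, n)) x y y' : qf M x (y + y') = qf M x y + qf M x y'.
Proof. by rewrite /qf !mulmxDr mxE. Qed.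

Lemma qfDm (C : numClosedFieldType) m n (M N : 'M[C]_(m, n)) x y : qf (M + N) x y = qf M x y + qf N x y.
Proof. by rewrite /qf mulmxDr mulmxDl mxE. Qed.

Lemma qf_delta (C : numClosedFieldType) n (M : 'M[C]_n) i j : qf M (delta_mx i 0) (delta_mx j 0) = M i j.
Proof.
rewrite /qf -colE.
have -> : adj (delta_mx i 0 : 'cV[C]_n) = delta_mx 0 i.
  by apply/matrixP => a b; rewrite !mxE rmorph_nat andbC.
by rewrite -rowE !mxE.
Qed.

Lemma qf_expand (C : numClosedFieldType) n (M : 'M[C]_n) t x y :
  qf M (t *: x + y) (t *: x + y) =
  t^* * t * qf M x x + t^* * qf M x y + t * qf M y x + qf M y y.
Proof. by rewrite !qfDl !qfDr !qfZl !qfZr; ring. Qed.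

Lemma real_lin (C : numClosedFieldType) (z e : C) :
  (forall s : C, s \is Num.real -> 0 <= s * z + e) -> z = 0.
Proof.
move=> H.
have e0 : 0 <= e by have := H 0 (rpred0 _); rewrite mul0r add0r.
have zr : z \is Num.real.
  have := H 1 (rpred1 _); rewrite mul1r => /ger0_real h.
  by have := rpredB h (ger0_real e0); rewrite addrK.
apply/eqP; apply/negPn/negP => nz.
have sr : - (e + 1) / z \is Num.real.
  by rewrite rpredM ?rpredV // rpredN rpredD ?rpred1 ?ger0_real.
have := H _ sr; rewrite mulfVK // opprD addrAC addNr add0r.
by rewrite oppr_ge0 ler10.
Qed.

Lemma quad0 (C : numClosedFieldType) (b c e : C) :
  (forall t : C, 0 <= t^* * b + t * c + e) -> b = 0 /\ c = 0.
Proof.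
move=> H.
have h1 : b + c = 0.
  apply: (@real_lin _ _ e) => s sr; have := H s.
  by rewrite conj_Creal // mulrDr.
have h2 : 'i * (c - b) = 0.
  apply: (@real_lin _ _ e) => s sr; have := H ('i * s).
  rewrite rmorphM /= conjCi conj_Creal //.
  by congr (0 <= _ + _); ring.
have h3 : c - b = 0.
  by move: h2 => /eqP; rewrite mulf_eq0 (negPf (neq0Ci _)) /= => /eqP.
have cb : c = b by apply/eqP; rewrite -subr_eq0 h3.
have b0 : b *+ 2 = 0 by rewrite mulr2n -{2}cb h1.
by move/eqP: b0; rewrite mulrn_eq0 /= => /eqP b0; split => //; rewrite cb.
Qed.

Lemma herm_scal (C : numClosedFieldType) (b c : C) :
  (forall t : C, t^* * b + t * c \is Num.real) -> c = b^*.
Proof.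
move=> H.
have h1 := H 1; have h2 := H 'i.
rewrite CrealE in h1; rewrite CrealE in h2.
move/eqP: h1; rewrite rmorph1 !mul1r rmorphD /= => h1.
move/eqP: h2; rewrite conjCi rmorphD /= !rmorphM /= rmorphN /= conjCi opprK => h2.
have ii : 'i * 'i = -1 :> C by rewrite -expr2 sqrCi.
have e2 : b - c = - b^* + c^*.
  have := congr1 (fun x => 'i * x) h2 => /=.
  rewrite !mulrDr !mulrA => h; rewrite !mulrN ii !mulN1r opprK !mul1r in h.
  by rewrite h.
have e3 : (c - b^*) *+ 2 = ((b + c) - (b^* + c^*)) - ((b - c) - (- b^* + c^*)) by ring.
rewrite h1 e2 !subrr ?subr0 in e3.
by move/eqP: e3; rewrite mulrn_eq0 /= subr_eq0 => /eqP.
Qed.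

Lemma psd_qf (C : numClosedFieldType) d (M : 'M[C]_d) v : psd M -> 0 <= qf M v v.
Proof. by move=> H; exact: H. Qed.

Lemma psd_diag (C : numClosedFieldType) d (M : 'M[C]_d) i : psd M -> 0 <= M i i.
Proof. by move=> H; rewrite -qf_delta; exact: psd_qf. Qed.

Lemma psd_herm (C : numClosedFieldType) d (M : 'M[C]_d) : psd M -> adj M = M.
Proof.
move=> H; apply/matrixP => i j; rewrite !mxE.
have -> : M i j = (M j i)^* ; last by [].
apply: herm_scal => t.
have h := psd_qf (t *: delta_mx j 0 + delta_mx i 0) H.
rewrite qf_expand !qf_delta in h.
have r1 : t^* * t * M j j \is Num.real.
  apply: rpredM; last exact/ger0_real/psd_diag.
  by rewrite mulrC; apply/ger0_real/mul_conjC_ge0.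
have r2 : M i i \is Num.real by exact/ger0_real/psd_diag.
have := rpredB (rpredB (ger0_real h) r1) r2.
by congr (_ \is Num.real); ring.
Qed.

Lemma psd_tr (C : numClosedFieldType) d (M : 'M[C]_d) : psd M -> 0 <= \tr M.
Proof. by move=> H; rewrite /mxtrace; apply: sumr_ge0 => i _; exact: psd_diag. Qed.

Lemma psd_tr0 (C : numClosedFieldType) d (M : 'M[C]_d) : psd M -> \tr M = 0 -> M = 0.
Proof.
move=> H t0.
have dz : forall i, M i i = 0.
  by move=> i; apply: (psumr_eq0P (P := predT) (F := fun i => M i i)) => // k _; exact: psd_diag.
apply/matrixP => i j; rewrite mxE.
have [] := @quad0 _ (M i j) (M j i) (M j j) => // t.
have h := psd_qf (t *: delta_mx i 0 + delta_mx j 0) H.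
by rewrite qf_expand !qf_delta dz mulr0 add0r in h.
Qed.

Lemma lin0 (C : numClosedFieldType) d (f : 'M[C]_d -> 'M[C]_d) : linear f -> f 0 = 0.
Proof.
move=> Hf; have := Hf 1 0 0; rewrite !scale1r addr0 => h.
have h2 : f 0 + f 0 = f 0 + 0 by rewrite addr0 -h.
exact: (addrI _ h2).
Qed.

Lemma linD (C : numClosedFieldType) d (f : 'M[C]_d -> 'M[C]_d) u v : linear f ->
  f (u + v) = f u + f v.
Proof. by move=> Hf; have := Hf 1 u v; rewrite !scale1r. Qed.

Lemma linZ (C : numClosedFieldType) d (f : 'M[C]_d -> 'M[C]_d) a u : linear f ->
  f (a *: u) = a *: f u.
Proof. by move=> Hf; have := Hf a u 0; rewrite !addr0 lin0 // addr0. Qed.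

Lemma linN (C : numClosedFieldType) d (f : 'M[C]_d -> 'M[C]_d) u : linear f ->
  f (- u) = - f u.
Proof. by move=> Hf; rewrite -scaleN1r linZ // scaleN1r. Qed.

Lemma linB (C : numClosedFieldType) d (f : 'M[C]_d -> 'M[C]_d) u v : linear f ->
  f (u - v) = f u - f v.
Proof. by move=> Hf; rewrite linD // linN. Qed.

Lemma linsum (C : numClosedFieldType) d (f : 'M[C]_d -> 'M[C]_d) (I : Type) (r : seq I)
  (P : pred I) (F : I -> 'M[C]_d) : linear f ->
  f (\sum_(i <- r | P i) F i) = \sum_(i <- r | P i) f (F i).
Proof.
move=> Hf; apply: (big_morph f (id1 := 0) (op1 := +%R)) => [x y|]; first exact: linD.
exact: lin0.
Qed.

Lemma tr_lin (C : numClosedFieldType) d (f : 'M[C]_d -> 'M[C]_d) X : linear f ->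
  \tr (f X) = \tr (X *m dual_map f 1%:M).
Proof.
move=> Hf.
have -> : \tr (X *m dual_map f 1%:M) = \sum_i \sum_j X i j * \tr (f (delta_mx i j)).
  rewrite /mxtrace; apply: eq_bigr => i _; rewrite mxE; apply: eq_bigr => j _.
  by rewrite mxE mulmx1.
rewrite {1}(matrix_sum_delta X) linsum // raddf_sum; apply: eq_bigr => i _.
rewrite linsum // raddf_sum; apply: eq_bigr => j _.
by rewrite linZ // /= mxtraceZ.
Qed.

Lemma tr_delta (C : numClosedFieldType) d (M : 'M[C]_d) i j :
  \tr (delta_mx i j *m M) = M j i.
Proof.
rewrite -(mul_delta_mx (0 : 'I_1)) -mulmxA mxtrace_mulC -rowE -colE.
by rewrite /mxtrace big_ord1 !mxE.
Qed.

Lemma dual_eq (C : numClosedFieldType) d (f : 'M[C]_d -> 'M[C]_d) M :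
  (forall X, \tr (f X) = \tr (X *m M)) -> dual_map f 1%:M = M.
Proof. by move=> H; apply/matrixP => j i; rewrite mxE mulmx1 H tr_delta. Qed.

Lemma dual_add (C : numClosedFieldType) d (f g : 'M[C]_d -> 'M[C]_d) :
  dual_map (fun X => f X + g X) 1%:M = dual_map f 1%:M + dual_map g 1%:M.
Proof. by apply/matrixP => j i; rewrite !mxE mulmxDl mxtraceD. Qed.

Lemma adj_sum (C : numClosedFieldType) m n (I : Type) (r : seq I) (P : pred I)
  (F : I -> 'M[C]_(m, n)) :
  adj (\sum_(i <- r | P i) F i) = \sum_(i <- r | P i) adj (F i).
Proof.
apply: (big_morph (@adj C m n) (id1 := 0) (op1 := +%R)) => [x y|]; first exact: adjD.
by apply/matrixP => i j; rewrite !mxE rmorph0.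
Qed.

Lemma qf0m (C : numClosedFieldType) m n (x : 'cV[C]_m) (y : 'cV[C]_n) : qf 0 x y = 0.
Proof. by rewrite /qf mulmx0 mul0mx mxE. Qed.

Lemma block_gram (C : numClosedFieldType) d m k (B : 'I_k -> 'M[C]_(d, m)) :
  block_psd (fun i j => B i *m adj (B j)).
Proof.
move=> v; set w := \sum_j adj (B j) *m v j.
have -> : \sum_i \sum_j (adj (v i) *m (B i *m adj (B j)) *m v j) 0 0 = (adj w *m w) 0 0.
  rewrite /w adj_sum mulmx_suml summxE; apply: eq_bigr => i _.
  rewrite adjM adjK mulmx_sumr summxE; apply: eq_bigr => j _.
  by rewrite !mulmxA.
rewrite mxE; apply: sumr_ge0 => i _; rewrite !mxE mulrC; exact: mul_conjC_ge0.
Qed.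

Lemma psd_block1 (C : numClosedFieldType) d (M : 'M[C]_d) :
  block_psd (fun _ _ : 'I_1 => M) -> psd M.
Proof. by move=> H v; have := H (fun _ => v); rewrite !big_ord1. Qed.

Lemma cp_pos (C : numClosedFieldType) d (f : 'M[C]_d -> 'M[C]_d) m (B : 'M[C]_(d, m)) :
  completely_positive f -> psd (f (B *m adj B)).
Proof.
move=> Hf; apply: psd_block1.
exact: (Hf 1 (fun _ _ => B *m adj B) (block_gram (fun _ => B))).
Qed.

Lemma cp_conj (C : numClosedFieldType) d (B : 'M[C]_d) :
  completely_positive (fun X => adj B *m X *m B).
Proof.
move=> k X H v; have := H (fun i => B *m v i).
congr (0 <= _); apply: eq_bigr => i _; apply: eq_bigr => j _.
by rewrite adjM !mulmxA.
Qed.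

Lemma cp_comp (C : numClosedFieldType) d (f g : 'M[C]_d -> 'M[C]_d) :
  completely_positive f -> completely_positive g -> completely_positive (fun X => f (g X)).
Proof. by move=> Hf Hg k X H; apply: (Hf k (fun i j => g (X i j))); exact: Hg. Qed.

Lemma cp_add (C : numClosedFieldType) d (f g : 'M[C]_d -> 'M[C]_d) :
  completely_positive f -> completely_positive g -> completely_positive (fun X => f X + g X).
Proof.
move=> Hf Hg k X H v.
have -> : \sum_(i < k) \sum_(j < k) (adj (v i) *m (f (X i j) + g (X i j)) *m v j) 0 0 =
  \sum_(i < k) \sum_(j < k) (adj (v i) *m f (X i j) *m v j) 0 0 +
  \sum_(i < k) \sum_(j < k) (adj (v i) *m g (X i j) *m v j) 0 0.
  rewrite -big_split; apply: eq_bigr => i _; rewrite -big_split; apply: eq_bigr => j _ /=.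
  by rewrite mulmxDr mulmxDl mxE.
exact: addr_ge0 (Hf k X H v) (Hg k X H v).
Qed.

Lemma cp_vanish (C : numClosedFieldType) d (f : 'M[C]_d -> 'M[C]_d) (B0 B1 : 'M[C]_d) :
  completely_positive f -> f (B0 *m adj B0) = 0 ->
  f (B0 *m adj B1) = 0 /\ f (B1 *m adj B0) = 0.
Proof.
move=> Hf h0.
pose B := fun i : 'I_2 => if val i == 0%N then B0 else B1.
have H := Hf 2 _ (block_gram B).
have key : forall a b, f (B0 *m adj B1) a b = 0 /\ f (B1 *m adj B0) b a = 0.
  move=> a b.
  apply: (@quad0 _ _ _ (qf (f (B1 *m adj B1)) (delta_mx b 0) (delta_mx b 0))) => t.
  have := H (fun i : 'I_2 => if val i == 0%N then t *: delta_mx a 0 else delta_mx b 0).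
  rewrite !big_ord_recl !big_ord0 /= /B /= !addr0.
  have E : forall (M : 'M[C]_d) x y, (adj x *m M *m y) 0 0 = qf M x y by [].
  rewrite !E h0 qf0m add0r !qfZl !qfZr addrA -[f _ a b]qf_delta -[f _ b a]qf_delta.
  by [].
split; apply/matrixP => a b; rewrite mxE; first by case: (key a b).
by case: (key b a).
Qed.

Definition Fd (C : numClosedFieldType) d (U : 'M[C]_d) (g : 'I_d -> C) : 'M[C]_d :=
  adj U *m diag_mx (\row_j g j) *m U.

Lemma Fd_ext (C : numClosedFieldType) d (U : 'M[C]_d) g h : g =1 h -> Fd U g = Fd U h.
Proof.
move=> e; rewrite /Fd (_ : \row_j g j = \row_j h j) //.
by apply/matrixP => i j; rewrite !mxE e.
Qed.

Lemma FdM (C : numClosedFieldType) d (U : 'M[C]_d) g h : U *m adj U = 1%:M ->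
  Fd U g *m Fd U h = Fd U (fun j => g j * h j).
Proof.
move=> UU; rewrite /Fd !mulmxA -[adj U *m _ *m U *m adj U]mulmxA UU mulmx1.
rewrite -[adj U *m _ *m _]mulmxA mulmx_diag; congr (_ *m diag_mx _ *m _).
by apply/matrixP => i j; rewrite !mxE.
Qed.

Lemma FdD (C : numClosedFieldType) d (U : 'M[C]_d) g h :
  Fd U g + Fd U h = Fd U (fun j => g j + h j).
Proof.
rewrite /Fd -mulmxDl -mulmxDr; congr (_ *m _ *m _).
by apply/matrixP => i j; rewrite !mxE mulrnDl.
Qed.

Lemma Fd1 (C : numClosedFieldType) d (U : 'M[C]_d) : U *m adj U = 1%:M ->
  Fd U (fun _ => 1) = 1%:M.
Proof.
move=> UU; rewrite /Fd.
have -> : diag_mx (\row_(j < d) (1 : C)) = 1%:M by apply/matrixP => i j; rewrite !mxE.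
by rewrite mulmx1; apply: mulmx1C.
Qed.

Lemma Fd0 (C : numClosedFieldType) d (U : 'M[C]_d) : Fd U (fun _ => 0) = 0.
Proof.
rewrite /Fd.
have -> : diag_mx (\row_(j < d) (0 : C)) = 0 by apply/matrixP => i j; rewrite !mxE mul0rn.
by rewrite mulmx0 mul0mx.
Qed.

Lemma Fdadj (C : numClosedFieldType) d (U : 'M[C]_d) g :
  adj (Fd U g) = Fd U (fun j => (g j)^*).
Proof.
rewrite /Fd !adjM adjK mulmxA; congr (_ *m _ *m _).
rewrite /adj tr_diag_mx map_diag_mx; congr diag_mx.
by apply/matrixP => i j; rewrite !mxE.
Qed.

Lemma tr_cyc (C : numClosedFieldType) d (B X B' : 'M[C]_d) :
  \tr (B *m X *m B') = \tr (X *m (B' *m B)).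
Proof. by rewrite -mulmxA mxtrace_mulC !mulmxA. Qed.

Lemma cp_ext (C : numClosedFieldType) d (f g : 'M[C]_d -> 'M[C]_d) :
  f =1 g -> completely_positive f -> completely_positive g.
Proof.
move=> e H k X HX v.
rewrite (_ : \sum_(i < k) \sum_(j < k) _ = \sum_(i < k) \sum_(j < k) (adj (v i) *m f (X i j) *m v j) 0 0).
  exact: H.
by apply: eq_bigr => i _; apply: eq_bigr => j _; rewrite e.
Qed.

Lemma tr_cyc4 (C : numClosedFieldType) d (B X B' M : 'M[C]_d) :
  \tr (B *m X *m B' *m M) = \tr (X *m (B' *m M *m B)).
Proof. by rewrite -!mulmxA mxtrace_mulC !mulmxA. Qed.

Lemma psd_dual (C : numClosedFieldType) d (f : 'M[C]_d -> 'M[C]_d) :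
  linear f -> completely_positive f -> psd (dual_map f 1%:M).
Proof.
move=> Hl Hc v.
have -> : (adj v *m dual_map f 1%:M *m v) 0 0 = \tr (f (v *m adj v)).
  by rewrite tr_lin // -[v *m adj v *m _]mulmxA mxtrace_mulC /mxtrace big_ord1.
exact: psd_tr (cp_pos _ Hc).
Qed.

Theorem proposition1 (C : numClosedFieldType) (d : nat) (Hd : (1 < d)%N)
  (L : 'M[C]_d -> 'M[C]_d) :
  quantum_operation L ->
  extension L (Lmin L) /\
  (forall L' : 'M[C]_d -> 'M[C]_d, extension L L' ->
     exists Phi : 'M[C]_d -> 'M[C]_d,
       quantum_channel Phi /\ forall rho, L' rho = Phi (Lmin L rho)).
Proof.
move=> [linL [cpL leL]].
set D := dual_map L 1%:M.
set A := 1%:M - D.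
have psdA : psd A by exact: leL.
have hermA : adj A = A by exact: psd_herm.
have normA : A \is normalmx by apply/normalmxP; rewrite -/(adj A) hermA.
set U := spectralmx A.
set a := spectral_diag A.
have Uu : U \is unitarymx by exact: spectral_unitarymx.
have UU : U *m adj U = 1%:M by exact/unitarymxP.
have AF : A = Fd U (fun j => a 0 j).
  have := orthomx_spectralP normA; rewrite -/U -/a invmx_unitary // => {1}->.
  rewrite /Fd; congr (_ *m diag_mx _ *m _).
  by apply/matrixP => i j; rewrite !mxE (ord1 i).
have a_ge0 : forall j, 0 <= a 0 j.
  move=> j; have := psd_qf (adj U *m delta_mx j 0) psdA.
  have -> : qf A (adj U *m delta_mx j 0) (adj U *m delta_mx j 0) =
            qf (U *m A *m adj U) (delta_mx j 0) (delta_mx j 0).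
    by rewrite /qf adjM adjK !mulmxA.
  have -> : U *m A *m adj U = diag_mx (\row_j a 0 j).
    by rewrite AF /Fd !mulmxA UU mul1mx -mulmxA UU mulmx1.
  by rewrite qf_delta !mxE eqxx mulr1n.
pose s := fun j => sqrtC (a 0 j).
have s_real : forall j, s j \is Num.real by move=> j; apply/ger0_real; rewrite sqrtC_ge0.
have SF : msqrt A = Fd U s.
  rewrite /msqrt -/U -/a invmx_unitary // /Fd; congr (_ *m diag_mx _ *m _).
  by apply/matrixP => i j; rewrite !mxE (ord1 i).
pose S := msqrt A.
have {}SF : S = Fd U s by exact: SF.
have SH : adj S = S by rewrite SF Fdadj; apply: Fd_ext => j; rewrite conj_Creal.
have SS : S *m S = A.
  by rewrite SF FdM // AF; apply: Fd_ext => j; rewrite /s -expr2 sqrtCK.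
have LminE : forall X, Lmin L X = S *m X *m S by [].
have dualLmin : dual_map (Lmin L) 1%:M = A.
  by apply: dual_eq => X; rewrite LminE tr_cyc SS.
have linLmin : linear (Lmin L).
  move=> c X Y; rewrite !LminE mulmxDr mulmxDl -scalemxAr -scalemxAl.
  by [].
split.
  split; first split; [exact: linLmin | split | ].
  - by apply: (cp_ext _ (cp_conj S)) => X; rewrite SH.
  - rewrite /loewner_le dualLmin /A opprB addrC subrK.
    exact: psd_dual.
  - by rewrite /trace_preserving dual_add dualLmin /A -/D addrC subrK.
move=> L' [[linL' [cpL' _]] tp].
rewrite /trace_preserving dual_add -/D in tp.
have dL' : dual_map L' 1%:M = A.
  have := congr1 (fun M => M - D) tp => /=.
  by rewrite [D + _]addrC addrK.
have trL' : forall X, \tr (L' X) = \tr (X *m A) by move=> X; rewrite tr_lin // dL'.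
pose sp := fun j => (s j)^-1.
pose q := fun j => 1 - s j * (s j)^-1.
have sq0 : forall j, s j * q j = 0.
  move=> j; rewrite /q; have [->|nz] := eqVneq (s j) 0; first by rewrite mul0r.
  by rewrite mulfV // subrr mulr0.
set Sp := Fd U sp.
set Q := Fd U q.
have QH : adj Q = Q.
  rewrite /Q Fdadj; apply: Fd_ext => j; rewrite conj_Creal // /q.
  by rewrite rpredB ?rpred1 // rpredM ?rpredV.
have SpH : adj Sp = Sp.
  by rewrite /Sp Fdadj; apply: Fd_ext => j; rewrite conj_Creal // /sp rpredV.
have QS : Q *m S = 0.
  by rewrite SF FdM // -(Fd0 U); apply: Fd_ext => j; rewrite mulrC sq0.
have SQ : S *m Q = 0.
  by rewrite SF FdM // -(Fd0 U); apply: Fd_ext => j; rewrite sq0.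
have SpS : Sp *m S = 1%:M - Q.
  have h : Sp *m S + Q = 1%:M.
    rewrite SF FdM // FdD -(Fd1 UU); apply: Fd_ext => j.
    by rewrite /sp /q [(s j)^-1 * _]mulrC addrC subrK.
  by rewrite -h addrK.
have SSp : S *m Sp = 1%:M - Q.
  have h : S *m Sp + Q = 1%:M.
    rewrite SF FdM // FdD -(Fd1 UU); apply: Fd_ext => j.
    by rewrite /sp /q addrC subrK.
  by rewrite -h addrK.
have trQ : L' (Q *m adj Q) = 0.
  apply: psd_tr0; first exact: cp_pos.
  rewrite trL' QH -SS mulmxA -[Q *m Q *m S]mulmxA QS mulmx0 mul0mx.
  exact: mxtrace0.
have v1 : forall Y, L' (Q *m Y) = 0.
  by move=> Y; have [h _] := cp_vanish (adj Y) cpL' trQ; rewrite adjK in h.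
have v2 : forall Y, L' (Y *m Q) = 0.
  by move=> Y; have [_ h] := cp_vanish Y cpL' trQ; rewrite QH in h.
exists (fun X => L' (Sp *m X *m Sp) + Q *m X *m Q).
split.
  split.
    move=> c X Y /=.
    rewrite (mulmxDr Sp) mulmxDl -scalemxAr -scalemxAl (@linD _ _ L') // (@linZ _ _ L') //.
    by rewrite (mulmxDr Q) mulmxDl -scalemxAr -scalemxAl scalerDr addrACA.
  split.
    apply: cp_add.
      apply: (cp_comp cpL'); apply: (cp_ext _ (cp_conj Sp)) => X /=.
      by rewrite SpH.
    by apply: (cp_ext _ (cp_conj Q)) => X; rewrite QH.
  rewrite /trace_preserving; apply: dual_eq => X.
  have e1 : \tr (Sp *m X *m Sp *m A) = \tr (X *m (Sp *m A *m Sp)).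
    exact: tr_cyc4.
  rewrite mxtraceD trL' e1 tr_cyc -mxtraceD -mulmxDr.
  congr (\tr (X *m _)).
  rewrite -SS SF /Sp /Q !FdM // FdD -(Fd1 UU); apply: Fd_ext => j.
  rewrite /sp /q; have [->|nz] := eqVneq (s j) 0.
    by rewrite invr0 !mul0r subr0 mulr1 add0r.
  by rewrite mulfV // subrr mul0r addr0 mulrA mulVf // mul1r mulfV.
move=> rho; rewrite LminE /=.
rewrite (mulmxA Q (S *m rho) S) (mulmxA Q S rho) QS !mul0mx addr0.
rewrite (mulmxA Sp (S *m rho) S) (mulmxA Sp S rho) -(mulmxA _ S Sp).
rewrite SpS SSp.
by rewrite mulmxBr mulmx1 (@linB _ _ L') // v2 subr0 mulmxBl mul1mx (@linB _ _ L') // v1 subr0.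
Qed.
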